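(* In any latin square of even order, the number of transversals is even.
   Context: A latin square of order $n$ is an $n\times n$ array of $n$ symbols in which each symbol occurs exactly once in each row and column. A transversal is a set of $n$ cells, one from each row and one from each column, no two containing the same symbol. *)

(* Defs.v *)
From mathcomp Require Import all_boot.
Set Implicit Arguments. Unset Strict Implicit. Unset Printing Implicit Defensive.

(* Since there are exactly n symbols and n cells per row/column, "exactly once"
   is equivalent to injectivity of every row and every column; we state it
   literally as "exactly once". *)
Definition latin_square (n : nat) (L : 'I_n -> 'I_n -> 'I_n) : Prop :=
  (forall (i : 'I_n) (s : 'I_n), #|[set j : 'I_n | L i j == s]| = 1) /\
  (forall (j : 'I_n) (s : 'I_n), #|[set i : 'I_n | L i j == s]| = 1).

Definition transversal (n : nat) (L : 'I_n -> 'I_n -> 'I_n)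
    (T : {set 'I_n * 'I_n}) : bool :=
  [&& #|T| == n,
      [forall i : 'I_n, #|[set c in T | c.1 == i]| == 1],
      [forall j : 'I_n, #|[set c in T | c.2 == j]| == 1] &
      [forall c1 in T, forall c2 in T,
          (L c1.1 c1.2 == L c2.1 c2.2) ==> (c1 == c2)]].

Definition num_transversals (n : nat) (L : 'I_n -> 'I_n -> 'I_n) : nat :=
  #|[set T : {set 'I_n * 'I_n} | transversal L T]|.

(* Main.v *)
Require Import Defs.
From mathcomp Require Import all_boot all_order all_algebra all_fingroup.
Set Implicit Arguments. Unset Strict Implicit. Unset Printing Implicit Defensive.

Section Trans.
Variables (n : nat) (L : 'I_n -> 'I_n -> 'I_n).

Definition cells (s : 'S_n) : {set 'I_n * 'I_n} := [set (i, s i) | i : 'I_n].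
Definition Bs (s : 'S_n) : {set 'I_n} := [set L i (s i) | i : 'I_n].

Lemma cells_inj : injective cells.
Proof.
move=> s s' e; apply/permP => i.
have : (i, s i) \in cells s' by rewrite -e; apply: imset_f.
by case/imsetP => j _ [-> ->].
Qed.

Lemma card_cells s : #|cells s| = n.
Proof.
rewrite card_imset ?cardsT ?card_ord //.
by move=> i j [].
Qed.

Lemma Bs_inj (s : 'S_n) : Bs s == setT -> injective (fun i => L i (s i)).
Proof.
move=> H i j e.
have : #|Bs s| == #|'I_n| by rewrite (eqP H) cardsT.
rewrite /Bs; move/imset_injP => Hi; exact: Hi.
Qed.

Lemma inj_Bs (s : 'S_n) : injective (fun i => L i (s i)) -> Bs s == setT.
Proof.
move=> H; rewrite eqEcard subsetT /= card_imset // cardsT; exact: max_card.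
Qed.

Lemma trans_cells s : Bs s == setT -> Defs.transversal L (cells s).
Proof.
move/Bs_inj => gi.
apply/and4P; split.
- by rewrite card_cells.
- apply/forallP => i; apply/cards1P; exists (i, s i); apply/setP => c.
  rewrite !inE; apply/andP/eqP.
    by case=> /imsetP [j _ ->] /= /eqP ->.
  by move=> ->; split => //; apply: imset_f.
- apply/forallP => j; apply/cards1P; exists ((s^-1)%g j, j); apply/setP => c.
  rewrite !inE; apply/andP/eqP.
    by case=> /imsetP [i _ ->] /= /eqP <-; rewrite permK.
  move=> ->; split => //.
  have {2}-> : j = s ((s^-1)%g j) by rewrite permKV.
  by apply: imset_f.
- apply/forall_inP => c1 /imsetP [i _ ->]; apply/forall_inP => c2 /imsetP [j _ ->].
  by apply/implyP => /eqP /= /gi ->.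
Qed.

Lemma cells_trans T : Defs.transversal L T -> exists s, T = cells s /\ Bs s == setT.
Proof.
case/and4P => /eqP cT /forallP rows /forallP cols /forall_inP dist.
pose f i := (odflt (i, i) [pick c in T | c.1 == i]).2.
have fT : forall i, (i, f i) \in T.
  move=> i; rewrite /f; case: pickP => [c /andP [cTc /eqP c1]|H] /=.
    by rewrite -c1 -surjective_pairing.
  have /cards1P [x Hx] := rows i.
  have : x \in [set c in T | c.1 == i] by rewrite Hx inE.
  by rewrite inE H.
have finj : injective f.
  move=> i i' e.
  have /cards1P [x Hx] := cols (f i).
  have : (i, f i) \in [set c in T | c.2 == f i] by rewrite inE fT /=.
  have : (i', f i') \in [set c in T | c.2 == f i] by rewrite inE fT /= e.
  rewrite Hx !inE => /eqP e1 /eqP e2; move: e1; rewrite -e2; by case=> ->.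
pose s := perm finj.
have sf : forall i, s i = f i by move=> i; rewrite permE.
have sub : cells s \subset T.
  by apply/subsetP => c /imsetP [i _ ->]; rewrite sf.
exists s; split.
  apply/eqP; rewrite eq_sym eqEcard sub card_cells cT /=.
  done.
apply: inj_Bs => i j e.
have := dist (i, s i); rewrite (subsetP sub) ?imset_f // => /(_ isT) /forall_inP.
move/(_ (j, s j)); rewrite (subsetP sub) ?imset_f // => /(_ isT) /implyP.
have e' : L (i, s i).1 (i, s i).2 == L (j, s j).1 (j, s j).2 by apply/eqP.
move/(_ e')/eqP; by case.
Qed.

Lemma num_eq : num_transversals L = #|[set s : 'S_n | Bs s == setT]|.
Proof.
rewrite /num_transversals -(card_imset _ cells_inj); apply: eq_card => T; rewrite inE; apply/idP/imsetP.
  by case/cells_trans => s [-> H]; exists s; rewrite ?inE.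
by case=> s; rewrite inE => H ->; apply: trans_cells.
Qed.
End Trans.

Section Alg.
Import GRing.Theory.
Local Open Scope ring_scope.
Import GRing.Theory.
Notation F := 'F_2.
Lemma Fm1 : (-1 : F) = 1. Proof. exact: (@val_inj _ _ _ (-1 : F) 1 erefl). Qed.
Lemma F11 : (1 + 1 : F) = 0. Proof. exact: val_inj. Qed.
Lemma F10 : (1 : F) != 0. Proof. by []. Qed.
Lemma Fcases (x : F) : x = 0 \/ x = 1.
Proof. case: x => [[|[|k]] Hk] /=; [left|right|]; first (by apply: val_inj); first (by apply: val_inj); done. Qed.
Lemma Fnat k : (k%:R : F) = (odd k)%:R.
Proof. elim: k => // k IH; rewrite mulrS IH /=. case: (odd k) => /=; last by rewrite addr0. exact: val_inj. Qed.

Definition J n : 'M[F]_n := const_mx 1.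

Lemma JJ n : ~~ odd n -> J n *m J n = 0.
Proof.
move=> ev; apply/matrixP => i k; rewrite !mxE.
under eq_bigr do rewrite !mxE mulr1.
by rewrite sumr_const card_ord Fnat (negbTE ev).
Qed.

Lemma sing n (M : 'M[F]_n) : (0 < n)%N -> M *m J n = 0 -> \det M = 0.
Proof.
move=> n0 MJ; case: (Fcases (\det M)) => // d1.
have uM : M \in unitmx by rewrite unitmxE d1 unitr1.
have : J n = 0 by rewrite -(mulKmx uM (J n)) MJ mulmx0.
move/matrixP => /(_ (Ordinal n0) (Ordinal n0)); rewrite !mxE => /eqP.
by rewrite (negbTE F10).
Qed.

Lemma shift n (M : 'M[F]_n) : ~~ odd n -> M *m J n = J n -> \det (M + J n) = \det M.
Proof.
move=> ev MJ.
have -> : M + J n = M *m (1%:M + J n) by rewrite mulmxDr mulmx1 MJ.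
rewrite det_mulmx.
have sq : (1%:M + J n) *m (1%:M + J n) = 1%:M.
  rewrite mulmxDr !mulmxDl JJ // !mul1mx mulmx1 addr0 -addrA.
  have -> : J n + J n = 0.
    by apply/matrixP => i j; rewrite !mxE F11.
  by rewrite addr0.
have : \det (1%:M + J n) * \det (1%:M + J n) = 1.
  by rewrite -det_mulmx sq; apply: det1.
case: (Fcases (\det (1%:M + J n))) => ->; last by rewrite !mulr1.
by rewrite mulr0 => /eqP; rewrite eq_sym (negbTE F10).
Qed.

Lemma sum_ind (T : finType) (b : pred T) : \sum_(j : T) ((b j)%:R : F) = (#|[set j | b j]|)%:R.
Proof.
rewrite -sumr_const [in RHS]big_mkcond /=; apply: eq_bigr => j _; rewrite inE.
by case: (b j).
Qed.

Section Latin.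
Variables (n : nat) (L : 'I_n -> 'I_n -> 'I_n).
Hypothesis rowL : forall (i : 'I_n) (s : 'I_n), #|[set j : 'I_n | L i j == s]| = 1.
Hypothesis n0 : (0 < n)%N.
Hypothesis ev : ~~ odd n.

Definition M (A : {set 'I_n}) : 'M[F]_n := \matrix_(i, j) ((L i j \in A)%:R).
Notation B := (Bs L).

Lemma injL i : injective (L i).
Proof.
move=> j j' e; have := rowL i (L i j); move/eqP/cards1P => [x Hx].
have : j \in [set k | L i k == L i j] by rewrite inE.
have : j' \in [set k | L i k == L i j] by rewrite inE -e.
by rewrite Hx !inE => /eqP -> /eqP ->.
Qed.

Lemma MJ A : M A *m J n = (#|A|%:R) *: J n.
Proof.
apply/matrixP => i k; rewrite !mxE.
under eq_bigr do rewrite !mxE mulr1.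
rewrite sum_ind mulr1; congr (_ %:R).
rewrite -(card_preimset A (@injL i)); apply: eq_card => j; by rewrite !inE.
Qed.

Lemma MC A : M (~: A) = M A + J n.
Proof.
apply/matrixP => i j; rewrite !mxE inE; case: (L i j \in A) => /=.
  by rewrite addrC F11.
by rewrite add0r.
Qed.

Lemma detMC A : \det (M (~: A)) = \det (M A).
Proof.
rewrite MC; have := MJ A; rewrite Fnat; case: (odd #|A|) => /= e.
  by apply: shift => //; rewrite e scale1r.
rewrite scale0r in e.
rewrite (sing n0 e) sing //.
by rewrite mulmxDl e JJ // addr0.
Qed.

Lemma detM A : \det (M A) = \sum_(s : 'S_n) ((B s \subset A)%:R).
Proof.
rewrite /determinant; apply: eq_bigr => s _; rewrite Fm1 expr1n mul1r.
case: (boolP (B s \subset A)) => H.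
  apply: big1 => i _; rewrite mxE.
  have : L i (s i) \in B s by apply: imset_f.
  by move/(subsetP H) => ->.
case/subsetPn: H => x /imsetP [i _ ->] Hx.
by rewrite (bigD1 i) //= mxE (negbTE Hx) mul0r.
Qed.

Lemma cardsup (C : {set 'I_n}) : #|[set A : {set 'I_n} | C \subset A]| = (2 ^ #|~: C|)%N.
Proof.
rewrite -card_powerset.
have -> : [set A : {set 'I_n} | C \subset A] = (@setC _) @: powerset (~: C).
  apply/setP => A; rewrite inE; apply/idP/imsetP.
    move=> H; exists (~: A); last by rewrite setCK.
    by rewrite inE setCS.
  by move=> [D]; rewrite inE => H ->; rewrite -setCS setCK.
apply: card_imset; exact: (@setC_inj _).
Qed.

Lemma sumdet : \sum_(A : {set 'I_n}) \det (M A) = (#|[set s : 'S_n | B s == setT]|)%:R.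
Proof.
under eq_bigr do rewrite detM.
rewrite exchange_big /=.
rewrite -sum_ind; apply: eq_bigr => s _.
rewrite sum_ind cardsup Fnat oddX /= orbF cards_eq0.
congr (_ %:R); congr (nat_of_bool _); apply/eqP/eqP.
  by move=> H; rewrite -[B s]setCK H setC0.
by move=> ->; rewrite setCT.
Qed.

Lemma sumdet0 : \sum_(A : {set 'I_n}) \det (M A) = 0.
Proof.
set x0 := Ordinal n0.
rewrite (bigID (fun A : {set 'I_n} => x0 \in A))/=.
rewrite [X in _ + X](reindex_inj (@setC_inj _)) /=.
have -> : \sum_(j : {set 'I_n} | x0 \notin ~: j) \det (M (~: j)) = \sum_(j : {set 'I_n} | x0 \in j) \det (M j).
  by apply: eq_big => [j|j _]; [rewrite inE negbK | apply: detMC].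
by rewrite -mulr2n -mulr_natr Fnat /= mulr0.
Qed.
End Latin.
End Alg.

Theorem theorem1p3 (n : nat) (L : 'I_n -> 'I_n -> 'I_n) :
  0 < n -> latin_square L -> ~~ odd n -> ~~ odd (num_transversals L).
Proof.
move=> n0 [rowL _] ev.
have := sumdet0 rowL n0 ev; rewrite sumdet // -num_eq Fnat.
by case: (odd (num_transversals L)) => //= /eqP; rewrite (negbTE F10).
Qed.
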